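(* Let $\mathbf A$ be a pseudo-Kleene lattice. Then $\mathbf A$ satisfies (SP2) if and only if, for all $x,y\in A$ with $x\leq y$: (1) $\pi_{0_{x,y}}(x)$ and $\pi_{0_{x,y}}(y)$ are sharp elements of $\mathbf{Local}(x,y)$; and (2) $(\mathrm{Sh}(\mathbf{Local}(x,y)),\leq,{}',0_{x,y},1_{x,y})$ is an orthogonal poset.
   Context: A pseudo-Kleene lattice is an algebra $(A,\land,\lor,{}',0,1)$ that is a bounded lattice with an antitone involution ${}'$ ($x\leq y\Rightarrow y'\leq x'$, $x''=x$) satisfying $x\land x'\leq y\lor y'$. (SP2): for all $x,y$, $x\leq y$ implies $(x\land x')\lor(y\land y')=(x'\land y)\land(x'\land y)'$. For $x,y\in A$ put $0_{x,y}=(x\land x')\lor(y\land y')$, $1_{x,y}=(x\lor x')\land(y\lor y')$, and for $z,w\in A$, $\pi_z(w)=(w\land(z\lor z'))\lor(z\land z')$. The localizer $\mathbf{Local}(x,y)$ is the pseudo-Kleene lattice on the interval $[0_{x,y},1_{x,y}]$ with $\land,\lor,{}'$ inherited from $\mathbf A$ and bounds $0_{x,y},1_{x,y}$. An element $u$ of a pseudo-Kleene lattice with bottom $b$ is sharp if $u\land u'=b$; $\mathrm{Sh}(\cdot)$ is the set of sharp elements. An orthogonal poset is a bounded poset with antitone involution ${}'$ in which $u\land u'$ is the bottom for every $u$ (meet existing) and, whenever $u\leq v'$, the join $u\lor v$ exists; here order and joins in $\mathrm{Sh}(\mathbf{Local}(x,y))$ are understood as those inherited from $\mathbf{Local}(x,y)$,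 i.e. for sharp $u\leq v'$ the element $u\lor v$ is sharp. *)

(* Defs.v *)
(* a pseudo-Kleene lattice is a bounded lattice
   (tbLatticeType) together with a unary operation [c] (the involution ')
   satisfying the axioms in [pseudo_kleene]. *)
From HB Require Import structures.
From mathcomp Require Import all_boot all_order.
Set Implicit Arguments. Unset Strict Implicit. Unset Printing Implicit Defensive.
Import Order.LTheory.
Local Open Scope order_scope.

Section PK.
Context {disp : Order.disp_t} {L : tbLatticeType disp}.
Variable c : L -> L.

Definition pseudo_kleene : Prop :=
  [/\ (forall x y : L, x <= y -> c y <= c x),
      (forall x : L, c (c x) = x) &
      (forall x y : L, x `&` c x <= y `|` c y)].

Definition SP2 : Prop :=
  forall x y : L, x <= y ->
    (x `&` c x) `|` (y `&` c y) = (c x `&` y) `&` c (c x `&` y).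

Definition zero_xy (x y : L) : L := (x `&` c x) `|` (y `&` c y).
Definition one_xy (x y : L) : L := (x `|` c x) `&` (y `|` c y).

Definition proj (z w : L) : L := (w `&` (z `|` c z)) `|` (z `&` c z).

Definition in_local (x y u : L) : Prop := zero_xy x y <= u /\ u <= one_xy x y.

(* u is a sharp element of Local(x,y) (whose bottom is 0_{x,y}) *)
Definition sharp_local (x y u : L) : Prop :=
  in_local x y u /\ u `&` c u = zero_xy x y.

(* (S, <=, ', b, t) is an orthogonal poset, where S is a subset of L with
   order, involution, meets and joins inherited from L:
   b and t belong to S and bound it, S is closed under ', u /\ u' = b for
   u in S, and for u, v in S with u <= v' the join u \/ v lies in S. *)
Definition orthogonal_sub (S : L -> Prop) (b t : L) : Prop :=
  S b /\ S t /\
  (forall u, S u -> b <= u /\ u <= t) /\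
  (forall u, S u -> S (c u)) /\
  (forall u, S u -> u `&` c u = b) /\
  (forall u v, S u -> S v -> u <= c v -> S (u `|` v)).

End PK.

(* Main.v *)
Require Import Defs.
From HB Require Import structures.
From mathcomp Require Import all_boot all_order.
Import Order.LTheory.
Local Open Scope order_scope.

Section Aux.
Context {disp : Order.disp_t} {L : tbLatticeType disp}.
Variable c : L -> L.
Hypothesis hPK : pseudo_kleene c.

Let canti : forall x y : L, x <= y -> c y <= c x.
Proof. by case: hPK. Qed.
Let cc : forall x : L, c (c x) = x.
Proof. by case: hPK. Qed.
Let kl : forall x y : L, x `&` c x <= y `|` c y.
Proof. by case: hPK. Qed.

Lemma cJ (x y : L) : c (x `|` y) = c x `&` c y.
Proof.
apply/le_anti/andP; split.
  by rewrite lexI !canti ?leUl ?leUr.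
rewrite -[c x `&` c y]cc; apply: canti.
rewrite leUx; apply/andP; split.
  by rewrite -{1}[x]cc canti ?leIl.
by rewrite -{1}[y]cc canti ?leIr.
Qed.

Lemma cM (x y : L) : c (x `&` y) = c x `|` c y.
Proof. by rewrite -[x]cc -[y]cc -cJ !cc. Qed.

Lemma zero_le_one (x y : L) : zero_xy c x y <= one_xy c x y.
Proof. by rewrite /zero_xy /one_xy leUx !lexI !kl. Qed.

Lemma c_zero (x y : L) : c (zero_xy c x y) = one_xy c x y.
Proof. by rewrite /zero_xy /one_xy cJ !cM !cc [c x `|` x]joinC [c y `|` y]joinC. Qed.

Lemma c_one (x y : L) : c (one_xy c x y) = zero_xy c x y.
Proof. by rewrite -c_zero cc. Qed.

Lemma proj_eq (x y w : L) :
  proj c (zero_xy c x y) w = (w `&` one_xy c x y) `|` zero_xy c x y.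
Proof.
rewrite /proj c_zero; congr (_ `&` _ `|` _).
  by apply/join_idPr; apply: zero_le_one.
by apply/meet_idPl; apply: zero_le_one.
Qed.

Lemma proj_x (x y : L) : x <= y ->
  proj c (zero_xy c x y) x = x `|` (y `&` c y).
Proof.
move=> hxy; rewrite proj_eq.
have -> : x `&` one_xy c x y = x.
  by apply/meet_idPl; rewrite lexI leUl (le_trans hxy) ?leUl.
rewrite /zero_xy joinA; congr (_ `|` _); exact/join_idPl/leIl.
Qed.

Lemma proj_y (x y : L) : x <= y ->
  proj c (zero_xy c x y) y = y `&` (x `|` c x).
Proof.
move=> hxy; rewrite proj_eq.
have -> : y `&` one_xy c x y = y `&` (x `|` c x).
  by rewrite /one_xy [(x `|` c x) `&` _]meetC meetA; congr (_ `&` _); exact/meet_idPl/leUl.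
apply/join_idPl; rewrite /zero_xy leUx !lexI !kl leIl (le_trans (leIl _ _) hxy) //.
Qed.

Lemma sharp_c (x y u : L) : sharp_local c x y u -> sharp_local c x y (c u).
Proof.
move=> [[h1 h2] h3]; split; first split.
- by rewrite -c_one canti.
- by rewrite -c_zero canti.
- by rewrite cc meetC.
Qed.

End Aux.
Theorem lemma3p20 (disp : Order.disp_t) (L : tbLatticeType disp) (c : L -> L)
  (hPK : pseudo_kleene c) :
  SP2 c <->
  (forall x y : L, x <= y ->
     (sharp_local c x y (proj c (zero_xy c x y) x) /\
      sharp_local c x y (proj c (zero_xy c x y) y)) /\
     orthogonal_sub c (sharp_local c x y) (zero_xy c x y) (one_xy c x y)).
Proof.
have [canti cc kl] := hPK.
have ab := zero_le_one c hPK.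
split.
- move=> H x y hxy; split; first split.
  + rewrite proj_x //; split; first split.
    * by rewrite /zero_xy leUx leUr (le_trans (leIl _ _) (leUl _ _)).
    * by rewrite /one_xy lexI !leUx leUl kl (le_trans hxy) ?leUl // (le_trans (leIl _ _) (leUl _ _)).
    * have := H x (y `|` c y) (le_trans hxy (leUl _ _)).
      rewrite (cJ c hPK) cc => E.
      rewrite (cJ c hPK) (cM c hPK) cc.
      have e1 : (y `|` c y) `&` (c y `&` y) = c y `&` y.
        by apply/meet_idPr; rewrite (le_trans (leIr _ _) (leUl _ _)).
      rewrite e1 [c y `&` y]meetC [y `|` c y]joinC in E.
      by rewrite /zero_xy E (cM c hPK) (cJ c hPK) !cc meetC.
  + rewrite proj_y //; split; first split.
    * rewrite /zero_xy leUx !lexI !kl leIl (le_trans (leIl _ _) hxy) //.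
    * by rewrite /one_xy lexI leIr (le_trans (leIl _ _) (leUl _ _)).
    * have := H (x `&` c x) y (le_trans (leIl _ _) hxy).
      rewrite !(cM c hPK) !(cJ c hPK) !cc => E.
      have e1 : x `&` c x `&` (c x `|` x) = x `&` c x.
        by apply/meet_idPl; rewrite joinC kl.
      rewrite e1 [c x `|` x]joinC [(x `|` c x) `&` y]meetC [x `&` c x `|` c y]joinC in E.
      by rewrite /zero_xy E [c x `&` x]meetC.
  + have ca : c (zero_xy c x y) = one_xy c x y by apply: c_zero.
    have cb : c (one_xy c x y) = zero_xy c x y by apply: c_one.
    have abxy := ab x y.
    split; [|split; [|split; [|split; [|split]]]].
    * by split; [split|rewrite ca; apply/meet_idPl].
    * by split; [split|rewrite cb; apply/meet_idPr].
    * by move=> u [].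
    * exact: sharp_c.
    * by move=> u [].
    * move=> u v [[hu1 hu2] hu3] [[hv1 hv2] hv3] huv.
      split; first split.
      - exact: le_trans hu1 (leUl _ _).
      - by rewrite leUx hu2.
      - have := H u (c v) huv.
        rewrite cc hu3 meetC hv3 joinxx (cM c hPK) !cc => ->.
        by rewrite (cJ c hPK) meetC.
- move=> H x y hxy.
  have [[hu hv] [_ [_ [_ [hc [_ hj]]]]]] := H x y hxy.
  rewrite proj_x // in hu; rewrite proj_y // in hv.
  have hle : x `|` y `&` c y <= y `&` (x `|` c x).
    by rewrite leUx !lexI hxy leUl leIl kl.
  have := hj _ _ hu (hc _ hv); rewrite cc => /(_ hle) [_].
  have -> : x `|` y `&` c y `|` c (y `&` (x `|` c x)) = x `|` c y.
    rewrite (cM c hPK) (cJ c hPK) cc; apply/le_anti/andP; split.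
      rewrite !leUx leUl (le_trans (leIr _ _) (leUr _ _)) leUr.
      by rewrite (le_trans (leIr _ _) (leUl _ _)).
    rewrite leUx (le_trans (leUl _ _) (leUl _ _)) /=.
    by rewrite (le_trans _ (leUr _ _)) ?leUl.
  rewrite (cJ c hPK) cc => E.
  by rewrite -/(zero_xy c x y) -E (cM c hPK) cc meetC.
Qed.
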